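(* For each $\otimes\in\{\mathrm{del},\mathrm{add},\mathrm{edit}\}$, $\textsc{RM}^{\otimes}_{\mathrm{undir}}(a)\not\subseteq\mathrm{AC}^0$, i.e. some sentence $\phi=\forall x\,\psi$ with $\psi$ quantifier-free over a binary relation $E$ yields a problem $\textsc{RM}^{\otimes}_{\mathrm{undir}}(\phi)$ not in $\mathrm{AC}^0$.
   Context: An undirected graph is $(V,E)$ with $E\subseteq V\times V$ symmetric (self-loops allowed). For $S\subseteq V\times V$, $\|S\|=|\{\{u,v\}:(u,v)\in S\}|$. For a first-order sentence $\phi$ over $\{E\}$, $\textsc{RM}^{\mathrm{edit}}_{\mathrm{undir}}(\phi)$: given an undirected graph $(V,E)$ and $k\in\mathbb N$, is there $S$ with $\|S\|\le k$ such that $(V,E\triangle S)$ is undirected and satisfies $\phi$; del (resp. add) versions require $S\subseteq E$ (resp. $S\cap E=\emptyset$). $\mathrm{AC}^0$: problems decided by constant-depth polynomial-size unbounded fan-in and/or/not circuit families. *)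

(* Defs.v *)
From mathcomp Require Import all_boot.
Set Implicit Arguments. Unset Strict Implicit. Unset Printing Implicit Defensive.

Inductive qf (V : Type) : Type :=
| QTrue | QFalse
| QEdge of V & V
| QEq of V & V
| QNot of qf V
| QAnd of qf V & qf V
| QOr of qf V & qf V.

Fixpoint qf_eval (V : Type) (T : eqType) (E : rel T) (a : V -> T) (f : qf V) : bool :=
  match f with
  | QTrue => true
  | QFalse => false
  | QEdge u v => E (a u) (a v)
  | QEq u v => a u == a v
  | QNot g => ~~ qf_eval E a g
  | QAnd g h => qf_eval E a g && qf_eval E a h
  | QOr g h => qf_eval E a g || qf_eval E a h
  end.

(* The sentence  phi = forall x, psi  with psi quantifier-free in the single
   variable x (variable type unit); satisfaction in the structure (V,E). *)
Definition sat_forall1 (n : nat) (E : rel 'I_n) (psi : qf unit) : Prop :=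
  forall x : 'I_n, qf_eval E (fun _ => x) psi.

Inductive rm_op := RMdel | RMadd | RMedit.

Definition pair_norm (n : nat) (S : {set 'I_n * 'I_n}) : nat :=
  #|[set [set p.1; p.2] | p in S]|.

Definition symdiff (n : nat) (E : rel 'I_n) (S : {set 'I_n * 'I_n}) : rel 'I_n :=
  fun u v => E u v (+) ((u, v) \in S).

Definition RM (op : rm_op) (psi : qf unit) (n : nat) (E : rel 'I_n) (k : nat) : Prop :=
  exists S : {set 'I_n * 'I_n},
    [/\ pair_norm S <= k,
        symmetric (symdiff E S),
        sat_forall1 (symdiff E S) psi &
        match op with
        | RMdel => forall p, p \in S -> E p.1 p.2
        | RMadd => forall p, p \in S -> ~~ E p.1 p.2
        | RMedit => True
        end].

Inductive circ : Type :=
| CInp of nat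
| CConst of bool
| CNot of circ
| CAnd of seq circ
| COr of seq circ.

Fixpoint ceval (x : nat -> bool) (c : circ) : bool :=
  match c with
  | CInp i => x i
  | CConst b => b
  | CNot d => ~~ ceval x d
  | CAnd l => all id (map (ceval x) l)
  | COr l => has id (map (ceval x) l)
  end.

Fixpoint cdepth (c : circ) : nat :=
  match c with
  | CInp _ | CConst _ => 0
  | CNot d => (cdepth d).+1
  | CAnd l | COr l => (foldr maxn 0 (map cdepth l)).+1
  end.

Fixpoint csize (c : circ) : nat :=
  match c with
  | CInp _ | CConst _ => 1
  | CNot d => (csize d).+1
  | CAnd l | COr l => (sumn (map csize l)).+1
  end.

(* Encoding of an instance (n-vertex graph E, budget k) as a bit string of
   length 2*n*n: bit u*n+v is E(u,v); bit n*n+i is [i < k] (thermometer code;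
   since ||S|| <= n*n always, min(k, n*n) carries all relevant information). *)
Definition encode (n : nat) (E : rel 'I_n) (k : nat) : nat -> bool :=
  fun i =>
    if i < n * n then [exists u : 'I_n, exists v : 'I_n, (i == u * n + v) && E u v]
    else if i < 2 * (n * n) then (i - n * n < k)
    else false.

(* A problem on (undirected graph, k) instances is in (non-uniform) AC^0 if
   some family of circuits of constant depth and size polynomial in n decides
   it on all encoded instances with E symmetric. *)
Definition in_AC0 (P : forall n : nat, rel 'I_n -> nat -> Prop) : Prop :=
  exists (d c : nat) (C : nat -> circ),
    forall n, [/\ cdepth (C n) <= d,
                  csize (C n) <= c * n.+1 ^ c &
                  forall (E : rel 'I_n) (k : nat), symmetric E ->
                    (ceval (encode E k) (C n) <-> P n E k)].

(* Main.v *)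
Require Import Defs.
Set Warnings "-notation-overridden,-ambiguous-paths,-notation-incompatible-prefix".
From mathcomp Require Import all_boot all_algebra.
From mathcomp Require Import zify ring.
Set Implicit Arguments. Unset Strict Implicit. Unset Printing Implicit Defensive.
Import GRing.Theory.

Definition symd (T : finType) (A B : {set T}) := (A :\: B) :|: (B :\: A).

Lemma symdK (T : finType) (A B : {set T}) : symd (symd A B) B = A.
Proof. by apply/setP => i; rewrite !inE; case: (i \in A); case: (i \in B). Qed.

Lemma card_symd (T : finType) (A B : {set T}) : #|symd A B| <= #|A| + #|B|.
Proof.
apply: leq_trans (leq_card_setU _ _) _; apply: leq_add; apply: subset_leq_card;
  apply/subsetP => i; rewrite !inE => /andP[] //.
Qed.

Lemma size_ie (T : finType) : size (index_enum T) = #|T|.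
Proof. by rewrite cardT enumT. Qed.

Lemma card_setsT (T : finType) : #|{set T}| = 2 ^ #|T|.
Proof. by rewrite -(cardsT {set T}) -powersetT card_powerset cardsT. Qed.

Local Notation F := 'Z_3.
Local Open Scope ring_scope.

Lemma F_sq (x : F) : x != 0 -> x * x = 1.
Proof. by case: x => [[|[|[|]]] ?] //; rewrite /eq_op /=; move=> _; apply: val_inj. Qed.

Lemma F_m1 : (-1 : F) = 1 + 1. Proof. by apply: val_inj. Qed.
Lemma F_m1sq : (-1 : F) * -1 = 1. Proof. by apply: val_inj. Qed.
Lemma F_m1n0 : (-1 : F) != 0. Proof. by []. Qed.
Lemma F_10 : (1 : F) != 0. Proof. by []. Qed.
Lemma F_card : #|F| = 3%N. Proof. by rewrite card_ord. Qed.

Section Poly.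
Variable n : nat.
Local Notation X := {ffun 'I_n -> bool}.
Local Open Scope ring_scope.

Definition sg (b : bool) : F := if b then -1 else 1.

Definition chi (T : {set 'I_n}) (x : X) : F :=
  \prod_(i < n) (if i \in T then sg (x i) else 1).

Lemma chi_mul S T x : chi S x * chi T x = chi (symd S T) x.
Proof.
rewrite /chi -big_split /=; apply: eq_bigr => i _; rewrite !inE.
case: (i \in S); case: (i \in T); rewrite /= ?mulr1 ?mul1r //.
by rewrite /sg; case: (x i); rewrite ?F_m1sq ?mulr1.
Qed.

Lemma chi0 x : chi set0 x = 1.
Proof. by rewrite /chi big1 // => i _; rewrite inE. Qed.

Lemma chi1 i x : chi [set i] x = sg (x i).
Proof.
rewrite /chi (bigD1 i) //= inE eqxx big1 ?mulr1 // => j /negbTE ji.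
by rewrite inE ji.
Qed.

Definition rep (s : seq (F * {set 'I_n})) (x : X) : F :=
  \sum_(p <- s) p.1 * chi p.2 x.

Definition deg_le (D : nat) (f : X -> F) :=
  exists s, all (fun p : F * {set 'I_n} => (#|p.2| <= D)%N) s /\ forall x, f x = rep s x.

Lemma deg_le_ext D f g : (forall x, f x = g x) -> deg_le D f -> deg_le D g.
Proof. by move=> fg [s [H1 H2]]; exists s; split => // x; rewrite -fg. Qed.

Lemma deg_le_mono D D' f : (D <= D')%N -> deg_le D f -> deg_le D' f.
Proof.
move=> DD [s [H1 H2]]; exists s; split => //.
by apply/allP => p /(allP H1) /= H; apply: leq_trans DD.
Qed.

Lemma deg_le_const D (a : F) : deg_le D (fun _ => a).
Proof.
exists [:: (a, set0)]; split; first by rewrite /= cards0.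
by move=> x; rewrite /rep big_cons big_nil /= chi0 mulr1 addr0.
Qed.

Lemma deg_le_add D f g : deg_le D f -> deg_le D g -> deg_le D (fun x => f x + g x).
Proof.
move=> [s [H1 H2]] [t [H3 H4]]; exists (s ++ t); split.
  by rewrite all_cat H1 H3.
by move=> x; rewrite /rep big_cat /= H2 H4.
Qed.

Lemma deg_le_mul D D' f g : deg_le D f -> deg_le D' g -> deg_le (D + D') (fun x => f x * g x).
Proof.
move=> [s [H1 H2]] [t [H3 H4]].
exists [seq (p.1 * q.1, symd p.2 q.2) | p <- s, q <- t]; split.
  apply/all_allpairsP => p q ps qt /=.
  apply: leq_trans (card_symd _ _) _; apply: leq_add.
    exact: (allP H1 p ps).
  exact: (allP H3 q qt).
move=> x; rewrite H2 H4 /rep big_allpairs_dep /= big_distrl /=.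
apply: eq_bigr => p _; rewrite big_distrr /=; apply: eq_bigr => q _.
by rewrite -chi_mul; rewrite mulrACA.
Qed.

Lemma deg_le_scale D (a : F) f : deg_le D f -> deg_le D (fun x => a * f x).
Proof. by move=> H; apply: (deg_le_mul (deg_le_const 0 a) H). Qed.

Lemma deg_le_opp D f : deg_le D f -> deg_le D (fun x => - f x).
Proof. by move=> H; apply: deg_le_ext (deg_le_scale (-1) H) => x; rewrite mulN1r. Qed.

Lemma deg_le_sub D f g : deg_le D f -> deg_le D g -> deg_le D (fun x => f x - g x).
Proof. by move=> Hf Hg; apply: deg_le_add Hf (deg_le_opp Hg). Qed.

Lemma deg_le_sum (I : Type) (r : seq I) (P : pred I) D (f : I -> X -> F) :
  (forall i, deg_le D (f i)) -> deg_le D (fun x => \sum_(i <- r | P i) f i x).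
Proof.
move=> Hf; elim: r => [|i r IH].
  by apply: deg_le_ext (deg_le_const D 0) => x; rewrite big_nil.
case Pi: (P i).
  by apply: deg_le_ext (deg_le_add (Hf i) IH) => x; rewrite big_cons Pi.
by apply: deg_le_ext IH => x; rewrite big_cons Pi.
Qed.

Lemma deg_le_prod (I : Type) (r : seq I) D (f : I -> X -> F) :
  (forall i, deg_le D (f i)) -> deg_le (size r * D) (fun x => \prod_(i <- r) f i x).
Proof.
move=> Hf; elim: r => [|i r IH].
  by apply: deg_le_ext (deg_le_const _ 1) => x; rewrite big_nil.
by apply: deg_le_ext (deg_le_mul (Hf i) IH) => x; rewrite big_cons.
Qed.

Lemma deg_le_chi1 i : deg_le 1 (fun x => sg (x i)).
Proof.
exists [:: (1, [set i])]; split; first by rewrite /= cards1.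
by move=> x; rewrite /rep big_cons big_nil /= mul1r addr0 chi1.
Qed.

Definition delta (a x : X) : F := \prod_(i < n) (-1 - sg (a i) * sg (x i)).

Lemma deltaE a x : delta a x = if x == a then 1 else 0.
Proof.
case: eqP => [->|/eqP xa].
  rewrite /delta big1 // => i _; rewrite /sg; case: (a i); rewrite ?F_m1sq ?mulr1;
  by apply: val_inj.
have [i xai] : exists i, x i != a i.
  apply/existsP; move: xa; apply: contraR; rewrite negb_exists => /forallP H.
  by apply/eqP/ffunP => i; apply/eqP; move: (H i); rewrite negbK.
rewrite /delta (bigD1 i) //=; move: xai; rewrite /sg.
by case: (x i); case: (a i) => //= _; rewrite ?mulr1 ?mul1r ?mulN1r ?opprK ?addNr ?subrr mul0r.
Qed.

Lemma deg_le_all (f : X -> F) : deg_le n f.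
Proof.
have Hd : forall a, deg_le n (delta a).
  move=> a; have := @deg_le_prod _ (index_enum 'I_n) 1 (fun i x => -1 - sg (a i) * sg (x i)).
  rewrite size_ie card_ord muln1; apply => i.
  by apply: deg_le_sub (deg_le_const _ _) (deg_le_scale _ (deg_le_chi1 i)).
apply: deg_le_ext (deg_le_sum (index_enum X) xpredT (fun a => deg_le_scale (f a) (Hd a))).
move=> x; rewrite (bigD1 x) //= deltaE eqxx mulr1 big1 ?addr0 // => a /negbTE ax.
by rewrite deltaE eq_sym ax mulr0.
Qed.

End Poly.

Section Count.
Variable n : nat.
Local Notation X := {ffun 'I_n -> bool}.
Local Open Scope ring_scope.

Lemma chi_setT_split (T : {set 'I_n}) x : chi T x = chi setT x * chi (~: T) x.
Proof. by rewrite chi_mul; congr chi; apply/setP => i; rewrite !inE; case: (i \in T). Qed.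

Lemma trunc (G : {set X}) D (P : X -> F) : deg_le D P ->
  (forall x, x \in G -> chi setT x = P x) ->
  forall s0 : seq (F * {set 'I_n}), exists s,
    all (fun p : F * {set 'I_n} => (#|p.2| <= D + n./2)%N) s /\
    forall x, x \in G -> rep s0 x = rep s x.
Proof.
move=> [sP [HP1 HP2]] HG; elim => [|p s0 [s [Hs1 Hs2]]].
  by exists [::]; split => // x _.
case: (leqP #|p.2| (n./2)) => Hp.
  exists (p :: s); split.
     by rewrite /= Hs1 andbT (leq_trans Hp) // leq_addl.
  by move=> x xG; rewrite /rep !big_cons -/(rep s0 x) -/(rep s x) Hs2.
exists ([seq (p.1 * q.1, symd q.2 (~: p.2)) | q <- sP] ++ s); split.
  rewrite all_cat Hs1 andbT; apply/allP => r /mapP [q qP ->] /=.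
  apply: leq_trans (card_symd _ _) _; apply: leq_add; first exact: (allP HP1 q qP).
  have E1 := cardsC p.2; rewrite card_ord in E1.
  have E2 : n = (odd n + n./2 + n./2)%N by rewrite -addnA addnn odd_double_half.
  have E3 := leq_b1 (odd n).
  lia.
move=> x xG; rewrite /rep big_cons big_cat /= big_map -/(rep s0 x) -/(rep s x) Hs2 //.
congr (_ + _).
rewrite (chi_setT_split p.2) HG // HP2 /rep big_distrl /= big_distrr /=.
apply: eq_bigr => q _.
by rewrite -chi_mul !mulrA.
Qed.

Lemma count_G (G : {set X}) M :
  (forall f : X -> F, exists s, all (fun p : F * {set 'I_n} => (#|p.2| <= M)%N) s /\
     forall x, x \in G -> f x = rep s x) ->
  (#|G| <= #|[set T : {set 'I_n} | #|T| <= M]|)%N.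
Proof.
move=> H.
pose Dom := {ffun {T : {set 'I_n} | (#|T| <= M)%N} -> F}.
pose Cod := {ffun {x : X | x \in G} -> F}.
pose Phi (c : Dom) : Cod := [ffun x => \sum_T c T * chi (val T) (val x)].
have surj : forall g : Cod, exists c : Dom, Phi c = g.
  move=> g; pose f x := if insub x is Some x' then g x' else 0.
  have [s [Hs1 Hs2]] := H f.
  exists [ffun T => \sum_(p <- s | p.2 == val T) p.1].
  apply/ffunP => x; rewrite ffunE.
  transitivity (f (val x)); last by rewrite /f valK.
  rewrite Hs2 ?(valP x) // /rep.
  under eq_bigr do rewrite ffunE big_distrl /=.
  rewrite (exchange_big_dep xpredT) //= [LHS]big_seq [RHS]big_seq; apply: eq_bigr => p ps.
  have pM : (#|p.2| <= M)%N by exact: (allP Hs1 p ps).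
  rewrite (big_pred1 (Sub p.2 pM : {T : {set 'I_n} | (#|T| <= M)%N})) /=.
    by [].
  by move=> T; rewrite /= -val_eqE /= eq_sym.
have [h hK] := fin_all_exists surj.
have hinj : injective h by apply: (can_inj hK).
have := leq_card h hinj.
rewrite !card_ffun !card_sig F_card leq_exp2l //.
by rewrite (eq_card (B := G)) //; rewrite (eq_card (A := [pred x | _]) (B := [set T : {set 'I_n} | (#|T| <= M)%N])) // => T; rewrite !inE.
Qed.

End Count.

Section OrGate.
Variable n l : nat.
Hypothesis l_gt0 : (0 < l)%N.
Local Notation X := {ffun 'I_n -> bool}.
Local Open Scope ring_scope.

Definition b2F (b : bool) : F := if b then 1 else 0.

Lemma card_X : #|X| = (2 ^ n)%N.
Proof. by rewrite card_ffun card_bool card_ord. Qed.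

Lemma or_gate m D (ps : 'I_m -> X -> F) (bs : 'I_m -> X -> bool) :
  (forall i, deg_le D (ps i)) ->
  exists q : X -> F, deg_le (l * (D + D)) q /\
    (#|[set x : X | [forall i, ps i x == b2F (bs i x)] &&
                    (q x != b2F [exists i, bs i x])]| * 2 ^ l <= 2 ^ n)%N.
Proof.
move=> Hps.
pose sj (S : {ffun 'I_l -> {set 'I_m}}) j x := \sum_(i in S j) ps i x.
pose q S x := 1 - \prod_(j <- index_enum 'I_l) (1 - sj S j x * sj S j x).
have degq : forall S, deg_le (l * (D + D)) (q S).
  move=> S; apply: deg_le_sub; first exact: deg_le_const.
  have := @deg_le_prod n _ (index_enum 'I_l) (D + D) (fun j x => 1 - sj S j x * sj S j x).
  rewrite size_ie card_ord; apply => j.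
  apply: deg_le_sub; first exact: deg_le_const.
  by apply: deg_le_mul; apply: deg_le_sum => i; exact: Hps.
pose Bad S := [set x : X | [forall i, ps i x == b2F (bs i x)] &&
                    (q S x != b2F [exists i, bs i x])].
suff [S HS] : exists S, (#|Bad S| * 2 ^ l <= 2 ^ n)%N by exists (q S); split.
have per_x : forall x, (#|[set S | x \in Bad S]| * 2 ^ l <= (2 ^ m) ^ l)%N.
  move=> x.
  case: (boolP [forall i, ps i x == b2F (bs i x)]) => Hc; last first.
    rewrite (_ : [set S | _] = set0) ?cards0 //.
    by apply/setP => S; rewrite !inE (negbTE Hc).
  case: (boolP [exists i, bs i x]) => Hex; last first.
    rewrite (_ : [set S | _] = set0) ?cards0 //.
    apply/setP => S; rewrite !inE Hc /= (negbTE Hex) /=.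
    have E : forall j, sj S j x = 0.
      move=> j; rewrite /sj big1 // => i _; move/forallP: Hc => /(_ i)/eqP ->.
      by move: Hex; rewrite negb_exists => /forallP /(_ i) /negbTE ->.
    by rewrite /q big1 ?subrr ?eqxx // => j _; rewrite E mul0r subr0.
  have Hex' := Hex; case/existsP: Hex => i0 Hi0.
  pose Z := [pred T : {set 'I_m} | \sum_(i in T) b2F (bs i x) == 0].
  have sub : [set S | x \in Bad S] \subset ffun_on Z.
    apply/subsetP => S; rewrite !inE Hc /= => HS; apply/ffun_onP => j.
    rewrite /Z inE; apply/negPn/negP => Hj; move: HS.
    rewrite /q (bigD1_seq j) ?mem_index_enum ?index_enum_uniq //=.
    have -> : sj S j x = \sum_(i in S j) b2F (bs i x).
      by apply: eq_bigr => i _; move/forallP: Hc => /(_ i)/eqP.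
    by rewrite F_sq // subrr mul0r subr0 Hex' eqxx.
  have cZ : (#|Z| * 2 <= 2 ^ m)%N.
    pose tog T := symd T [set i0].
    have tinj : injective tog by apply: (can_inj (g := tog)) => T; exact: symdK.
    have key : forall T : {set 'I_m}, i0 \in T ->
        \sum_(i in T) b2F (bs i x) = 1 + \sum_(i in tog T) b2F (bs i x).
      move=> T iT; rewrite (bigD1 i0) //= /b2F Hi0; congr (_ + _).
      apply: eq_bigl => i; rewrite /tog !inE; case: (i =P i0) => [->|] /=;
        by rewrite ?iT ?andbT ?andbF ?orbF.
    have sb : [set tog T | T in Z] \subset ~: [set T | T \in Z].
      apply/subsetP => V /imsetP [T TZ ->]; rewrite !inE; move: TZ; rewrite /Z inE.
      case: (boolP (i0 \in T)) => iT.
        rewrite key // => /eqP E; apply/negP => /eqP E2; move: E; rewrite E2 addr0.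
        by move=> /eqP; rewrite (negbTE F_10).
      have iT' : i0 \in tog T by rewrite !inE iT eqxx.
      move=> /eqP E0; rewrite (key _ iT') /tog symdK E0 addr0; exact: F_10.
    have := subset_leq_card sb; rewrite card_imset //.
    have := cardsC [set T | T \in Z]; rewrite card_setsT card_ord cardsE.
    by move=> <- H; rewrite muln2 -addnn leq_add2l.
  apply: leq_trans (_ : (#|Z| ^ l * 2 ^ l <= _)%N).
    by rewrite leq_mul2r (leq_trans (subset_leq_card sub)) ?orbT // card_ffun_on card_ord.
  by rewrite -expnMn leq_exp2r.
case: (boolP [exists S, (#|Bad S| * 2 ^ l <= 2 ^ n)%N]) => [/existsP [S HS]|]; first by exists S.
rewrite negb_exists => /forallP Hall; exfalso.
have H1 : (#|{ffun 'I_l -> {set 'I_m}}| * (2 ^ n).+1 <= \sum_S #|Bad S| * 2 ^ l)%N.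
  rewrite -sum_nat_const; apply: leq_sum => S _; rewrite ltnNge; exact: Hall.
have H2 : (\sum_S #|Bad S| * 2 ^ l = \sum_x #|[set S | x \in Bad S]| * 2 ^ l)%N.
  rewrite -!big_distrl /=; congr (_ * _).
  transitivity (\sum_S \sum_x (x \in Bad S : nat))%N.
    by apply: eq_bigr => S _; rewrite -sum1_card big_mkcond.
  rewrite exchange_big /=; apply: eq_bigr => x _.
  by rewrite -sum1_card [RHS]big_mkcond /=; apply: eq_bigr => S _; rewrite [S \in _]inE; case: (x \in Bad S).
have H3 : (\sum_x #|[set S | x \in Bad S]| * 2 ^ l <= \sum_(x : X) (2 ^ m) ^ l)%N.
  by apply: leq_sum => x _; exact: per_x.
move: H1; rewrite H2 => H1; have := leq_trans H1 H3.
rewrite sum_nat_const card_ffun card_setsT !card_ord card_X.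
have : (0 < (2 ^ m) ^ l)%N by rewrite !expn_gt0.
set a := ((2 ^ m) ^ l)%N; set b := (2 ^ n)%N; nia.
Qed.

End OrGate.

Lemma card_bigcup_le (I T : finType) (E : I -> {set T}) :
  (#|\bigcup_i E i| <= \sum_i #|E i|)%N.
Proof.
elim/big_rec2: _ => [|i U s _ H]; first by rewrite cards0.
by apply: leq_trans (leq_card_setU _ _) _; rewrite leq_add2l.
Qed.

Lemma nth_le_sumn (s : seq nat) i : (nth 0 s i <= sumn s)%N.
Proof.
elim: s i => [|a s IH] [|i] //=; first exact: leq_addr.
exact: leq_trans (IH i) (leq_addl _ _).
Qed.

Lemma nth_le_maxn (s : seq nat) i : (nth 0 s i <= foldr maxn 0 s)%N.
Proof.
elim: s i => [|a s IH] [|i] //=; first exact: leq_maxl.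
exact: leq_trans (IH i) (leq_maxr _ _).
Qed.

Definition dflt := CConst false.

Lemma sum_csize (s : seq circ) :
  (\sum_(i < size s) csize (nth dflt s i) = sumn (map csize s))%N.
Proof. by rewrite sumnE big_map (big_nth dflt) big_mkord. Qed.

Lemma csize_nth (s : seq circ) (i : 'I_(size s)) :
  (csize (nth dflt s i) <= sumn (map csize s))%N.
Proof. by rewrite -(nth_map dflt 0) ?ltn_ord // nth_le_sumn. Qed.

Lemma cdepth_nth (s : seq circ) (i : 'I_(size s)) :
  (cdepth (nth dflt s i) <= foldr maxn 0 (map cdepth s))%N.
Proof. by rewrite -(nth_map dflt 0) ?ltn_ord // nth_le_maxn. Qed.

Lemma has_ex (s : seq circ) (P : circ -> bool) :
  has P s = [exists i : 'I_(size s), P (nth dflt s i)].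
Proof.
apply/(has_nthP dflt)/existsP => [[i Hi HP]|[i HP]]; first by exists (Ordinal Hi).
by exists i.
Qed.

Lemma ceval_or x s : ceval x (COr s) = false (+) [exists i : 'I_(size s), false (+) ceval x (nth dflt s i)].
Proof. by rewrite /= has_map -has_ex. Qed.

Lemma ceval_and x s : ceval x (CAnd s) = true (+) [exists i : 'I_(size s), true (+) ceval x (nth dflt s i)].
Proof.
rewrite /= all_map -(has_ex s (predC (ceval x))) has_predC negbK.
by apply: eq_all.
Qed.

Section CircApprox.
Variable n l : nat.
Hypothesis l_gt0 : (0 < l)%N.
Local Notation X := {ffun 'I_n -> bool}.
Local Open Scope ring_scope.

Definition inp (x : X) (i : nat) : bool :=
  if (insub i : option 'I_n) is Some u then x u else false.

Definition err (c : circ) (p : X -> F) :=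
  #|[set x : X | p x != b2F (ceval (inp x) c)]|.

Definition fneg (neg : bool) (a : F) := if neg then 1 - a else a.

Lemma fneg_eq neg a b : (fneg neg a == fneg neg b) = (a == b).
Proof. by case: neg => //=; rewrite (inj_eq (can_inj (subKr 1))). Qed.

Lemma b2F_neg neg b : b2F (neg (+) b) = fneg neg (b2F b).
Proof. by case: neg; case: b => //=; rewrite ?subr0 ?subrr. Qed.

Lemma deg_le_fneg neg D (f : X -> F) : deg_le D f -> deg_le D (fun x => fneg neg (f x)).
Proof.
case: neg => // H; apply: deg_le_sub H; exact: deg_le_const.
Qed.

Lemma list_case (s : seq circ) (neg : bool) :
  (forall i : 'I_(size s), exists p, deg_le ((2 * l) ^ (cdepth (nth dflt s i))) p /\
     (err (nth dflt s i) p * 2 ^ l <= csize (nth dflt s i) * 2 ^ n)%N) ->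
  exists p, deg_le ((2 * l) ^ (foldr maxn 0 (map cdepth s)).+1) p /\
    (#|[set x : X | p x != b2F (neg (+) [exists i : 'I_(size s), neg (+) ceval (inp x) (nth dflt s i)])]|
       * 2 ^ l <= (sumn (map csize s)).+1 * 2 ^ n)%N.
Proof.
move=> /fin_all_exists [P HP].
set d' := foldr maxn 0 (map cdepth s).
have degP : forall i, deg_le ((2 * l) ^ d') (fun x => fneg neg (P i x)).
  move=> i; apply: deg_le_fneg; apply: deg_le_mono (proj1 (HP i)).
  by rewrite leq_pexp2l ?muln_gt0 ?l_gt0 // cdepth_nth.
have [q [dq bq]] := or_gate l_gt0
   (fun i x => neg (+) ceval (inp x) (nth dflt s i)) degP.
exists (fun x => fneg neg (q x)); split.
  apply: deg_le_fneg; apply: deg_le_mono dq.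
  by rewrite expnS addnn -mul2n mulnA [(l * 2)%N]mulnC.
set Bad := [set x | _ && _] in bq.
set E := fun i : 'I_(size s) => [set x : X | P i x != b2F (ceval (inp x) (nth dflt s i))].
have sub : [set x : X | fneg neg (q x) != b2F (neg (+) [exists i : 'I_(size s), neg (+) ceval (inp x) (nth dflt s i)])]
    \subset (\bigcup_i E i) :|: Bad.
  apply/subsetP => x; rewrite !inE b2F_neg fneg_eq => Hq.
  case: (boolP [exists i, x \in E i]) => [/existsP [i xi]|].
    by apply/orP; left; apply/bigcupP; exists i.
  rewrite negb_exists => /forallP Hall; apply/orP; right.
  rewrite Hq andbT; apply/forallP => i; move: (Hall i).
  by rewrite inE negbK b2F_neg fneg_eq.
apply: leq_trans (_ : ((\sum_i #|E i|) + #|Bad|) * 2 ^ l <= _)%N.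
  rewrite leq_mul2r; apply/orP; right.
  apply: leq_trans (subset_leq_card sub) _.
  apply: leq_trans (leq_card_setU _ _) _.
  by rewrite leq_add2r card_bigcup_le.
rewrite mulnDl mulSn addnC leq_add // big_distrl /= -sum_csize big_distrl /=.
by apply: leq_sum => i _; exact: (proj2 (HP i)).
Qed.

Lemma approx c : exists p, deg_le ((2 * l) ^ (cdepth c)) p /\
   (err c p * 2 ^ l <= csize c * 2 ^ n)%N.
Proof.
elim: {c}(csize c).+1 {-2}c (ltnSn (csize c)) => // k IH c Hc.
case: c Hc => [i|b|d|s|s] /= Hc.
- case Ei: (insub i : option 'I_n) => [u|].
    exists (fun x => (1 + 1) * (1 - sg (x u))); split.
      apply: deg_le_scale; apply: deg_le_sub; first exact: deg_le_const.
      exact: deg_le_chi1.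
    rewrite /err (_ : [set x | _] = set0) ?cards0 //.
    apply/setP => x; rewrite !inE /inp /= Ei /sg /b2F.
    by case: (x u); apply/negbTE/negPn/eqP; apply: val_inj.
  exists (fun _ => 0); split; first exact: deg_le_const.
  rewrite /err (_ : [set x | _] = set0) ?cards0 //.
  by apply/setP => x; rewrite !inE /inp /= Ei.
- exists (fun _ => b2F b); split; first exact: deg_le_const.
  by rewrite /err (_ : [set x | _] = set0) ?cards0 //; apply/setP => x; rewrite !inE eqxx.
- have [p [dp ep]] := IH d Hc.
  exists (fun x => fneg true (p x)); split.
    apply: deg_le_fneg; apply: deg_le_mono dp.
    by rewrite leq_pexp2l ?muln_gt0 ?l_gt0.
  apply: leq_trans _ (leq_trans ep _); last by rewrite leq_mul2r leqnSn orbT.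
  rewrite leq_mul2r; apply/orP; right; apply: subset_leq_card; apply/subsetP => x.
  by rewrite !inE /= (b2F_neg true) /= (inj_eq (can_inj (subKr 1))).
- have := @list_case s true.
  case=> [i|p [dp ep]].
    exact: (IH (nth dflt s i) (leq_ltn_trans (csize_nth i) Hc)).
  exists p; split => //; apply: leq_trans _ ep; rewrite leq_mul2r; apply/orP; right.
  by apply: subset_leq_card; apply/subsetP => x; rewrite !inE ceval_and.
- have := @list_case s false.
  case=> [i|p [dp ep]].
    exact: (IH (nth dflt s i) (leq_ltn_trans (csize_nth i) Hc)).
  exists p; split => //; apply: leq_trans _ ep; rewrite leq_mul2r; apply/orP; right.
  by apply: subset_leq_card; apply/subsetP => x; rewrite !inE ceval_or.
Qed.

End CircApprox.

Section Parity.
Variable n : nat.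
Local Notation X := {ffun 'I_n -> bool}.
Local Open Scope ring_scope.

Lemma chiT (x : X) : chi setT x = 1 + b2F (odd #|[set i | x i]|).
Proof.
have -> : chi setT x = \prod_(i in [set i | x i]) (-1 : F).
  rewrite /chi [RHS]big_mkcond /=; apply: eq_bigr => i _; rewrite !inE /sg.
  by case: (x i).
rewrite prodr_const -signr_odd; case: (odd _) => /=; last by rewrite addr0.
by rewrite expr1 F_m1.
Qed.

Lemma G_bound c p D : deg_le D p ->
  (forall x : X, ceval (inp x) c = odd #|[set i | x i]|) ->
  (#|[set x : X | p x == b2F (ceval (inp x) c)]| <=
     #|[set T : {set 'I_n} | #|T| <= D + n./2]|)%N.
Proof.
move=> dp Hpar; apply: count_G => f.
have [s0 [_ Hs0]] := deg_le_all f.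
have dP : deg_le D (fun x => 1 + p x) by apply: deg_le_add (deg_le_const _ _ 1) dp.
have HG : forall x, x \in [set x : X | p x == b2F (ceval (inp x) c)] -> chi setT x = 1 + p x.
  by move=> x; rewrite inE Hpar chiT => /eqP ->.
have [s [Hs1 Hs2]] := trunc dP HG s0.
by exists s; split => // x xG; rewrite Hs0 Hs2.
Qed.

End Parity.

Lemma half_odd m : (m.*2.+1)./2 = m.
Proof. by rewrite /= uphalf_double. Qed.

Lemma bin_decr m k : ('C(m.*2.+1, m.+1 + k) <= 'C(m.*2.+1, m.+1))%N.
Proof.
elim: k => [|k IH]; first by rewrite addn0.
apply: leq_trans IH; rewrite addnS.
have H := mul_bin_left (m.*2.+1) (m.+1 + k).
have H2 : (m.*2.+1 - (m.+1 + k) <= (m.+1 + k).+1)%N by rewrite -addnn; lia.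
rewrite -(leq_pmul2r (ltn0Sn (m.+1 + k))) [X in (X <= _)%N]mulnC H.
by rewrite [X in (_ <= X)%N]mulnC leq_mul2r H2 orbT.
Qed.

Lemma bin_mid m : ('C(m.*2.+1, m.+1) <= 2 * 'C(m.*2, m))%N.
Proof.
have H := mul_bin_diag (m.*2.+1) m; rewrite /= in H.
rewrite -(leq_pmul2l (ltn0Sn m)) -H mulnA.
by rewrite leq_mul2r -addnn; apply/orP; right; lia.
Qed.

Lemma bin_central m : ('C(m.*2, m) ^ 2 * (m.*2.+1) <= 16 ^ m)%N.
Proof.
elim: m => [|m IH]; first by rewrite bin0.
have E1 : 'C(m.+1.*2, m.+1) = (2 * 'C(m.*2.+1, m.+1))%N.
  have hs : (m.+1 <= m.*2.+1)%N by rewrite -addnn; lia.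
  have E : 'C(m.*2.+1, m) = 'C(m.*2.+1, m.+1).
    by rewrite -(bin_sub hs); congr 'C(_, _); rewrite -addnn; lia.
  by rewrite doubleS binS E mul2n addnn.
have E2 := mul_bin_diag (m.*2.+1) m; rewrite /= in E2.
set a := 'C(m.*2, m) in IH E2 *; set b := 'C(m.*2.+1, m.+1) in E1 E2 *.
rewrite E1 doubleS.
rewrite -(leq_pmul2r (_ : 0 < m.+1 ^ 2)%N) ?expn_gt0 //.
have -> : ((2 * b) ^ 2 * (m.*2.+2).+1 * m.+1 ^ 2 = 4 * (m.*2.+3) * (m.+1 * b) ^ 2)%N.
  by rewrite !expnMn; ring.
rewrite -E2 expnS.
apply: leq_trans (_ : 4 * (m.*2.+3) * (m.*2.+1) * 16 ^ m <= _)%N.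
  have -> : (4 * m.*2.+3 * (m.*2.+1 * a) ^ 2 = 4 * m.*2.+3 * m.*2.+1 * (a ^ 2 * m.*2.+1))%N.
    by rewrite expnMn; ring.
  by rewrite leq_mul2l IH orbT.
rewrite expnS; set t := (16 ^ m)%N; rewrite -addnn; nia.
Qed.

Lemma card_small m D :
  (#|[set T : {set 'I_(m.*2.+1)} | #|T| <= D + m]| <= 4 ^ m + D * 'C(m.*2.+1, m.+1))%N.
Proof.
set n := m.*2.+1.
have hn : n = (m + m).+1 by rewrite /n -addnn.
pose A := [set T : {set 'I_n} | (#|T| <= m)%N].
pose B := fun k : 'I_D => [set T : {set 'I_n} | #|T| == (m.+1 + k)%N].
have sub : [set T : {set 'I_n} | (#|T| <= D + m)%N] \subset A :|: \bigcup_k B k.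
  apply/subsetP => T; rewrite !inE => HT.
  case: (leqP #|T| m) => h; first by [].
  apply/orP; right; apply/bigcupP.
  have hk : (#|T| - m.+1 < D)%N by lia.
  by exists (Ordinal hk) => //; rewrite inE /= subnKC.
apply: leq_trans (subset_leq_card sub) _.
apply: leq_trans (leq_card_setU _ _) _; apply: leq_add.
  have sb : [set ~: T | T in A] \subset ~: A.
    apply/subsetP => V /imsetP [T TA ->]; rewrite !inE; move: TA; rewrite inE.
    have := cardsC T; rewrite card_ord; lia.
  have := subset_leq_card sb; rewrite card_imset; last exact: setC_inj.
  have := cardsC A; rewrite card_setsT card_ord.
  have -> : (2 ^ n = 2 * 4 ^ m)%N by rewrite /n expnS -mul2n expnM.
  lia.
apply: leq_trans (card_bigcup_le _) _.
rewrite -[X in (_ <= X * _)%N]card_ord -sum_nat_const.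
apply: leq_sum => k _; rewrite /B card_draws card_ord; exact: bin_decr.
Qed.

Lemma parity_lb m l c : (0 < l)%N ->
  (forall x : {ffun 'I_(m.*2.+1) -> bool}, ceval (inp x) c = odd #|[set i | x i]|) ->
  (4 * csize c <= 2 ^ l)%N -> (m.*2.+1 <= 16 * ((2 * l) ^ cdepth c) ^ 2)%N.
Proof.
move=> l0 Hpar Hs.
set n := m.*2.+1.
have [p [dp ep]] := @approx n l l0 c.
set D := ((2 * l) ^ cdepth c)%N in dp *.
set G := [set x : {ffun 'I_n -> bool} | p x == b2F (ceval (inp x) c)].
have HG := G_bound dp Hpar; rewrite -/G half_odd in HG.
have HS := card_small m D.
have HC := bin_mid m.
have Hc := bin_central m.
have Eerr : err c p = #|~: G|.
  by apply: eq_card => x; rewrite !inE.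
have HGc := cardsC G; rewrite card_X in HGc.
have hn : (2 ^ n = 2 * 4 ^ m)%N by rewrite /n expnS -mul2n expnM.
rewrite hn in HGc.
rewrite Eerr in ep.
have He : (4 * #|~: G| <= 2 * 4 ^ m)%N.
  rewrite -(leq_pmul2r (_ : 0 < 2 ^ l)%N) ?expn_gt0 //.
  apply: leq_trans (_ : 4 * (csize c * 2 ^ n) <= _)%N.
    by rewrite -mulnA leq_mul2l ep orbT.
  rewrite mulnA [X in (_ <= X)%N]mulnC -hn.
  by rewrite leq_mul2r Hs orbT.
set a := 'C(m.*2, m) in HC Hc.
set C := 'C(m.*2.+1, m.+1) in HS HC.
have HDC := leq_mul (leqnn D) HC.
have H1 : (4 ^ m <= 4 * D * a)%N.
  move: HG HS HGc He HDC; set g := #|G|; set e := #|~: G|; set sm := #|_|.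
  set q := (4 ^ m)%N; nia.
have H2 : (16 ^ m <= 16 * D ^ 2 * a ^ 2)%N.
  have -> : (16 ^ m = 4 ^ m * 4 ^ m)%N by rewrite -expnMn.
  apply: leq_trans (leq_mul H1 H1) _; rewrite !expnS expn0 !muln1; nia.
have H3 : (16 ^ m * (m.*2.+1) <= 16 ^ m * (16 * D ^ 2))%N.
  apply: leq_trans (_ : 16 * D ^ 2 * (a ^ 2 * m.*2.+1) <= _)%N.
    by rewrite mulnA leq_mul2r H2 orbT.
  by rewrite mulnC leq_mul2r Hc orbT.
by move: H3; rewrite leq_pmul2l ?expn_gt0.
Qed.

Fixpoint csubst (sg : nat -> circ) (c : circ) : circ :=
  match c with
  | CInp i => sg i
  | CConst b => CConst b
  | CNot d => CNot (csubst sg d)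
  | CAnd l => CAnd (map (csubst sg) l)
  | COr l => COr (map (csubst sg) l)
  end.

Lemma map_ext_In (A B : Type) (f g : A -> B) (l : seq A) :
  (forall a, List.In a l -> f a = g a) -> map f l = map g l.
Proof. by elim: l => //= a l IH H; rewrite H ?IH //; [move=> b Hb; apply: H; right | left]. Qed.

Lemma In_csize c l : List.In c l -> (csize c <= sumn (map csize l))%N.
Proof.
elim: l => //= a l IH [->|H]; first exact: leq_addr.
exact: leq_trans (IH H) (leq_addl _ _).
Qed.

Lemma circ_sind (P : circ -> Prop) :
  (forall c, (forall d, (csize d < csize c)%N -> P d) -> P c) -> forall c, P c.
Proof.
move=> H c; elim: {c}(csize c).+1 {-2}c (ltnSn (csize c)) => // k IH c Hc.
apply: H => d Hd; apply: IH; exact: leq_trans Hd Hc.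
Qed.

Lemma ceval_subst x sg c : ceval x (csubst sg c) = ceval (fun i => ceval x (sg i)) c.
Proof.
elim/circ_sind: c => c IH; case: c IH => [i|b|d|l|l] IH //=.
- by rewrite IH.
- rewrite -map_comp; congr (all id _); apply: map_ext_In => a Ha /=.
  by apply: IH; apply: leq_ltn_trans (In_csize Ha) _.
- rewrite -map_comp; congr (has id _); apply: map_ext_In => a Ha /=.
  by apply: IH; apply: leq_ltn_trans (In_csize Ha) _.
Qed.

Lemma maxn_map_le (A : Type) (f g : A -> nat) (l : seq A) :
  (forall a, List.In a l -> (f a <= (g a).+1)%N) ->
  (foldr maxn 0 (map f l) <= (foldr maxn 0 (map g l)).+1)%N.
Proof.
elim: l => //= a l IH H.
have h1 := H a (or_introl erefl).
have h2 := IH (fun b Hb => H b (or_intror Hb)).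
lia.
Qed.

Lemma sumn_map_le (A : Type) (f g : A -> nat) (l : seq A) :
  (forall a, List.In a l -> (f a <= 2 * g a)%N) ->
  (sumn (map f l) <= 2 * sumn (map g l))%N.
Proof.
elim: l => //= a l IH H.
have h1 := H a (or_introl erefl).
have h2 := IH (fun b Hb => H b (or_intror Hb)).
lia.
Qed.

Lemma cdepth_subst sg c : (forall i, cdepth (sg i) <= 1)%N ->
  (cdepth (csubst sg c) <= (cdepth c).+1)%N.
Proof.
move=> Hs; elim/circ_sind: c => c IH; case: c IH => [i|b|d|l|l] IH //=.
- by rewrite ltnS IH.
- rewrite ltnS -map_comp; apply: maxn_map_le => a Ha /=.
  by apply: IH; apply: leq_ltn_trans (In_csize Ha) _.
- rewrite ltnS -map_comp; apply: maxn_map_le => a Ha /=.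
  by apply: IH; apply: leq_ltn_trans (In_csize Ha) _.
Qed.

Lemma csize_subst sg c : (forall i, csize (sg i) <= 2)%N ->
  (csize (csubst sg c) <= 2 * csize c)%N.
Proof.
move=> Hs; elim/circ_sind: c => c IH; case: c IH => [i|b|d|l|l] IH //=.
- have := IH d (ltnSn _); lia.
- have : (sumn (map csize (map (csubst sg) l)) <= 2 * sumn (map csize l))%N.
    rewrite -map_comp; apply: sumn_map_le => a Ha /=.
    by apply: IH; apply: leq_ltn_trans (In_csize Ha) _.
  lia.
- have : (sumn (map csize (map (csubst sg) l)) <= 2 * sumn (map csize l))%N.
    rewrite -map_comp; apply: sumn_map_le => a Ha /=.
    by apply: IH; apply: leq_ltn_trans (In_csize Ha) _.
  lia.
Qed.

Definition psi_of (op : rm_op) : qf unit :=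
  if op is RMdel then QNot (QEdge tt tt) else QEdge tt tt.

Definition flag (op : rm_op) : bool := if op is RMdel then false else true.

Definition Ey (op : rm_op) (N : nat) (y : {ffun 'I_N -> bool}) : rel 'I_N :=
  fun u v => (u == v) && (flag op (+) y u).

Lemma Ey_sym op N y : symmetric (@Ey op N y).
Proof.
move=> u v; rewrite /Ey; case: (u =P v) => [->|/eqP uv]; first by rewrite eqxx.
by rewrite eq_sym (negbTE uv).
Qed.

Lemma in_diag N (A : {set 'I_N}) u v :
  ((u, v) \in [set (w, w) | w in A]) = (u == v) && (u \in A).
Proof.
apply/imsetP/andP => [[w wA [-> ->]]|[/eqP -> vA]]; first by rewrite eqxx.
by exists v.
Qed.

Lemma card_diag N (A : {set 'I_N}) :
  #|[set [set p.1; p.2] | p in [set (w, w) | w in A]]| = #|A|.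
Proof.
rewrite -imset_comp (eq_imset (g := set1)); last by move=> w /=; rewrite setUid.
by rewrite card_imset //; exact: set1_inj.
Qed.

Lemma RM_iff op N (y : {ffun 'I_N -> bool}) k :
  RM op (psi_of op) (Ey op y) k <-> (#|[set u | y u]| <= k)%N.
Proof.
split.
  move=> [S [Hn Hsym Hsat Hop]].
  have inS : forall u, y u -> (u, u) \in S.
    move=> u yu; move: (Hsat u); rewrite /psi_of /symdiff /Ey.
    by case: op {Hsym Hop Hsat} => /=; rewrite eqxx yu /=; case: ((u, u) \in S).
  apply: leq_trans Hn; rewrite /pair_norm.
  rewrite -(card_imset _ (@set1_inj _)); apply: subset_leq_card.
  apply/subsetP => X /imsetP [u]; rewrite inE => yu ->.
  by apply/imsetP; exists (u, u); rewrite ?inS //= setUid.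
move=> Hk.
exists [set (w, w) | w in [set u | y u]]; split.
- by rewrite /pair_norm card_diag.
- move=> u v; rewrite /symdiff /Ey !in_diag !inE.
  case: (u =P v) => [->|/eqP uv]; first by rewrite eqxx.
  by rewrite eq_sym (negbTE uv).
- move=> u; rewrite /psi_of; case: op => /=;
  by rewrite /symdiff /Ey in_diag !inE eqxx /=; case: (y u).
- case: op => // p; case: p => u v; rewrite in_diag inE => /andP [/eqP -> yv];
  by rewrite /Ey /= eqxx yv.
Qed.

Definition leaf (op : rm_op) (u : nat) : circ :=
  if op is RMdel then CInp u else CNot (CInp u).

Definition sigma (op : rm_op) (N j : nat) (i : nat) : circ :=
  if (i < N * N)%N then (if (N.+1 %| i)%N then leaf op (i %/ N.+1) else CConst false)
  else if (i < 2 * (N * N))%N then CConst (i - N * N < j)%N else CConst false.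

Lemma inp_ord N (x : {ffun 'I_N -> bool}) (u : 'I_N) : inp x u = x u.
Proof. by rewrite /inp valK. Qed.

Lemma sigma_ok op N j (x : {ffun 'I_N -> bool}) i :
  ceval (inp x) (sigma op N j i) = encode (Ey op x) j i.
Proof.
rewrite /sigma /encode; case: ifP => iN; last by case: ifP.
have -> : ceval (inp x) (if (N.+1 %| i)%N then leaf op (i %/ N.+1) else CConst false)
   = (N.+1 %| i)%N && (flag op (+) inp x (i %/ N.+1)).
  by case: ifP => //= _; case: op.
apply/idP/existsP.
- move=> /andP [/dvdnP [q Eq] Hq].
  have qN : (q < N)%N by rewrite Eq in iN; nia.
  exists (Ordinal qN); apply/existsP; exists (Ordinal qN); rewrite /Ey eqxx /=.
  rewrite Eq mulnS addnC eqxx /=.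
  by move: Hq; rewrite Eq mulnK // -[q]/(nat_of_ord (Ordinal qN)) inp_ord.
- move=> [u /existsP [v /andP [/eqP -> /andP [/eqP uv Hf]]]]; subst v.
  have -> : (u * N + u = u * N.+1)%N by rewrite mulnS addnC.
  by rewrite dvdn_mull //= mulnK // inp_ord.
Qed.

Lemma ceval_ext e1 e2 c : (forall i, e1 i = e2 i) -> ceval e1 c = ceval e2 c.
Proof.
move=> He; elim/circ_sind: c => c IH; case: c IH => [i|b|d|l|l] IH //=.
- by rewrite IH.
- congr (all id _); apply: map_ext_In => a Ha /=.
  by apply: IH; apply: leq_ltn_trans (In_csize Ha) _.
- congr (has id _); apply: map_ext_In => a Ha /=.
  by apply: IH; apply: leq_ltn_trans (In_csize Ha) _.
Qed.

Definition Th op N C j := csubst (sigma op N j) C.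
Definition Par op N C :=
  COr [seq CAnd [:: Th op N C j; CNot (Th op N C j.-1)] | j <- [seq j <- iota 0 N.+1 | odd j]].

Section ParSec.
Variables (op : rm_op) (N : nat) (C : circ).
Hypothesis HC : forall (E : rel 'I_N) (k : nat), symmetric E ->
  (ceval (encode E k) C <-> RM op (psi_of op) E k).

Lemma Th_ok (x : {ffun 'I_N -> bool}) j :
  ceval (inp x) (Th op N C j) = (#|[set u | x u]| <= j)%N.
Proof.
rewrite /Th ceval_subst (ceval_ext _ (e2 := encode (Ey op x) j)); last by move=> i; rewrite sigma_ok.
have HH := HC j (@Ey_sym op N x).
by apply/idP/idP => [/HH/RM_iff //| /RM_iff/HH //].
Qed.

Lemma Par_ok (x : {ffun 'I_N -> bool}) :
  ceval (inp x) (Par op N C) = odd #|[set u | x u]|.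
Proof.
rewrite /Par [ceval _ _]/= -map_comp has_map.
set K := #|[set u | x u]|.
have KN : (K <= N)%N by rewrite /K -[X in (_ <= X)%N](card_ord N) max_card.
apply/hasP/idP => [[j]|oK].
  rewrite mem_filter => /andP [oj _] /=.
  rewrite !Th_ok andbT => /andP [h1 h2].
  suff -> : K = j by [].
  by rewrite /K; move: oj h1 h2; case: j => //= j _; lia.
have K0 : (0 < K)%N by move: oK; case: (K).
exists K; first by rewrite mem_filter oK mem_iota /=; lia.
rewrite /= !Th_ok -/K leqnn /= andbT.
by move: K0; case: (K) => //= k _; rewrite ltnn.
Qed.

End ParSec.

Lemma maxn_map_bound (A : Type) (f : A -> nat) (l : seq A) K :
  (forall a, (f a <= K)%N) -> (foldr maxn 0 (map f l) <= K)%N.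
Proof. by move=> H; elim: l => //= a l IH; rewrite geq_max H IH. Qed.

Lemma sumn_map_bound (A : Type) (f : A -> nat) (l : seq A) K :
  (forall a, (f a <= K)%N) -> (sumn (map f l) <= size l * K)%N.
Proof. by move=> H; elim: l => //= a l IH; rewrite mulSn leq_add. Qed.

Lemma sigma_depth op N j i : (cdepth (sigma op N j i) <= 1)%N.
Proof. by rewrite /sigma; case: ifP; case: ifP => //; case: op. Qed.

Lemma sigma_size op N j i : (csize (sigma op N j i) <= 2)%N.
Proof. by rewrite /sigma; case: ifP; case: ifP => //; case: op. Qed.

Lemma cdepth_or_map (A : Type) (f : A -> circ) l K :
  (forall a, (cdepth (f a) <= K)%N) -> (cdepth (COr (map f l)) <= K.+1)%N.
Proof. by move=> H; rewrite /= ltnS -map_comp; apply: maxn_map_bound. Qed.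

Lemma csize_or_map (A : Type) (f : A -> circ) l K :
  (forall a, (csize (f a) <= K)%N) -> (csize (COr (map f l)) <= (size l * K).+1)%N.
Proof. by move=> H; rewrite /= ltnS -map_comp; apply: sumn_map_bound. Qed.

Lemma Par_depth op N C : (cdepth (Par op N C) <= cdepth C + 4)%N.
Proof.
have -> : (cdepth C + 4 = (cdepth C + 3).+1)%N by rewrite addnS.
apply: cdepth_or_map => j /=.
have h1 := cdepth_subst C (@sigma_depth op N j).
have h2 := cdepth_subst C (@sigma_depth op N j.-1).
rewrite /Th; lia.
Qed.

Lemma Par_size op N C : (csize (Par op N C) <= (N.+1 * (4 * csize C + 2)).+1)%N.
Proof.
rewrite /Par; apply: leq_trans (@csize_or_map _ _ _ (4 * csize C + 2) _) _.
  move=> j /=.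
  have h1 := csize_subst C (@sigma_size op N j).
  have h2 := csize_subst C (@sigma_size op N j.-1).
  rewrite /Th; lia.
rewrite ltnS leq_mul2r; apply/orP; right.
by rewrite size_filter (leq_trans (count_size _ _)) // size_iota.
Qed.

Lemma pow_ge_sq u : (4 <= u)%N -> (u * u <= 2 ^ u)%N.
Proof.
elim: u => // u IH; rewrite leq_eqVlt => /orP [/eqP <-|] //.
rewrite ltnS => h; have := IH h; rewrite expnS; nia.
Qed.

Lemma growth A B : exists s, (A * s.+1 ^ B < 2 ^ s)%N.
Proof.
set u := (A + B + 4)%N.
have u0 : (0 < 2 ^ u)%N by rewrite expn_gt0.
exists (2 ^ u).-1; rewrite prednK //.
rewrite -expnM.
apply: leq_trans (_ : 2 ^ A * 2 ^ (u * B) <= _)%N.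
  by rewrite ltn_pmul2r ?expn_gt0 // ltn_expl.
rewrite -expnD leq_exp2l //.
have u4 : (4 <= u)%N by rewrite /u; lia.
have h := pow_ge_sq u4.
have E : (u * u = u * A + u * B + u * 4)%N by rewrite {2}/u !mulnDr.
have E2 : (A <= u * A)%N by rewrite leq_pmull // /u; lia.
have h2 : (A + u * B < u * u)%N by rewrite E; lia.
move: h h2; set w := (2 ^ u)%N; lia.
Qed.

Theorem lemma4p4 :
  forall op : rm_op, exists psi : qf unit, ~ in_AC0 (RM op psi).
Proof.
move=> op; exists (psi_of op) => [[d [c0 [C HC]]]].
set a := (4 * (4 * c0 + 3))%N.
set K := (c0.+1 + a)%N.
set B := (2 * (d + 4))%N.
have [s Hs] := growth (16 * (2 * K) ^ B + 1) B.
set l := (s.+1 * c0.+1 + a)%N.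
set m := (2 ^ s).-1.
set N := m.*2.+1.
have hq : N.+1 = (2 ^ s.+1)%N.
  rewrite /N /m -mul2n expnS; have := expn_gt0 2 s; lia.
have [Hd Hsz Heq] := HC N.
have l0 : (0 < l)%N by rewrite /l /a; lia.
have Hpar := @Par_ok op N (C N) Heq.
have Hsize : (4 * csize (Par op N (C N)) <= 2 ^ l)%N.
  apply: leq_trans (_ : 4 * (N.+1 * (4 * (c0 * N.+1 ^ c0) + 2)).+1 <= _)%N.
    rewrite leq_mul2l; apply/orP; right; apply: leq_trans (Par_size _ _ _) _.
    by rewrite ltnS leq_mul2l leq_add2r leq_mul2l Hsz !orbT.
  rewrite /l expnD expnM -hq expnS.
  have ha : (a <= 2 ^ a)%N by apply: ltnW; rewrite ltn_expl.
  have hr : (0 < N.+1 ^ c0)%N by rewrite expn_gt0.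
  move: ha hr; set r := (N.+1 ^ c0)%N; set t := (2 ^ a)%N => ha hr.
  have h1 : (N.+1 * r * a <= N.+1 * r * t)%N by rewrite leq_mul2l ha orbT.
  have h2 : (N.+1 <= N.+1 * r)%N by rewrite leq_pmulr.
  move: h1; rewrite /a; lia.
have HL := parity_lb l0 Hpar Hsize.
have HD : (cdepth (Par op N (C N)) <= d + 4)%N := leq_trans (Par_depth _ _ _) (leq_add Hd (leqnn 4)).
have H1 : (N <= 16 * (2 * K) ^ B * s.+1 ^ B)%N.
  apply: leq_trans HL _ => //.
  rewrite -mulnA leq_mul2l; apply/orP; right.
  rewrite -expnM mulnC -/B -expnMn.
  apply: leq_trans (_ : (2 * l) ^ B <= _)%N.
    rewrite [(l * 2)%N]mulnC; apply: leq_pexp2l; first by rewrite muln_gt0 l0.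
    by rewrite /B mulnC leq_mul2l HD orbT.
  have B0 : (0 < B)%N by rewrite /B; lia.
  rewrite (leq_exp2r _ _ B0).
  rewrite /l /K.
  by rewrite -mulnA leq_mul2l /= mulnDl [(c0.+1 * _)%N]mulnC leq_add2l leq_pmulr.
have H2 : (2 ^ s <= N)%N by move: hq; rewrite expnS; lia.
move: Hs H1 H2; set z := (s.+1 ^ B)%N; set w := ((2 * K) ^ B)%N; lia.
Qed.
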